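(* Let $\gamma: I \to \mathbb{R}^3$ be a unit speed curve with arc-length parameter $s$, Frenet frame $\{T,N,B\}$, curvature $\kappa$ and torsion $\tau$. Let $u,v,w: I \to \mathbb{R}$ be differentiable functions with $u^2+v^2+w^2=1$, put $V = uT + vN + wB$, let $\lambda: I \to \mathbb{R}$ be a differentiable function, and let $\beta(s) = \int_0^s V(t)\,dt + \lambda(s)N(s)$, assumed to be a regular curve with Frenet frame $\{\overline{T},\overline{N},\overline{B}\}$. Then $\gamma$ is a $V$-Mannheim curve (i.e. $\overline{B}(s) = \epsilon N(s)$ with $\epsilon = \pm 1$ for all $s$) if and only if $$u\kappa - w\tau = \lambda(\kappa^2+\tau^2) \quad\text{and}\quad \lambda(s) = -\int v(s)\,ds \ \ (\text{i.e. } \lambda' = -v) \text{ on } I.$$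
   Context: Frenet equations: $T' = \kappa N$, $N' = -\kappa T + \tau B$, $B' = -\tau N$. Definition (from the paper): with $\gamma$, $V$, $\lambda$, $\beta$ as in the claim, $\gamma$ is called a $V$-Mannheim curve and $\beta$ its $V$-Mannheim partner curve if the principal normal $N$ of $\gamma$ and the binormal $\overline{B}$ of $\beta$ are linearly dependent at corresponding points, i.e. $\overline{B} = \epsilon N$, $\epsilon = \pm 1$. It is assumed that $\beta$ is regular with nonvanishing curvature so that its Frenet frame is defined. *)

(* Defs.v *)
From Stdlib Require Import Reals.
From Coquelicot Require Import Coquelicot.
Open Scope R_scope.

(* Vectors of R^3 as triples; Coquelicot equips R*R*R with its product
   normed-module structure, so [is_derive (f : R -> R3)] is the usual
   derivative of a space curve. *)
Definition R3 : Type := (R * R * R)%type.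

Definition vx (p : R3) : R := fst (fst p).
Definition vy (p : R3) : R := snd (fst p).
Definition vz (p : R3) : R := snd p.

Definition vadd (p q : R3) : R3 := (vx p + vx q, vy p + vy q, vz p + vz q).
Definition vscal (k : R) (p : R3) : R3 := (k * vx p, k * vy p, k * vz p).
Definition vopp (p : R3) : R3 := vscal (-1) p.
Definition vzero : R3 := (0, 0, 0).

Definition dot (p q : R3) : R := vx p * vx q + vy p * vy q + vz p * vz q.
Definition cross (p q : R3) : R3 :=
  (vy p * vz q - vz p * vy q,
   vz p * vx q - vx p * vz q,
   vx p * vy q - vy p * vx q).
Definition vnorm (p : R3) : R := sqrt (dot p p).

Definition vRInt (f : R -> R3) (a b : R) : R3 :=
  (RInt (fun t => vx (f t)) a b, RInt (fun t => vy (f t)) a b,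
   RInt (fun t => vz (f t)) a b).

(* Frenet frame of a regular curve beta with nonvanishing curvature,
   given its first and second derivatives d1 = beta', d2 = beta'':
   Tbar = beta'/|beta'|, Bbar = (beta' x beta'')/|beta' x beta''|,
   Nbar = Bbar x Tbar. *)
Definition frenetT (d1 : R3) : R3 := vscal (/ vnorm d1) d1.
Definition frenetB (d1 d2 : R3) : R3 :=
  vscal (/ vnorm (cross d1 d2)) (cross d1 d2).
Definition frenetN (d1 d2 : R3) : R3 := cross (frenetB d1 d2) (frenetT d1).

Definition Vfield (u v w : R -> R) (T N B : R -> R3) (s : R) : R3 :=
  vadd (vscal (u s) (T s)) (vadd (vscal (v s) (N s)) (vscal (w s) (B s))).

Definition betaCurve (u v w lambda : R -> R) (T N B : R -> R3) (s : R) : R3 :=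
  vadd (vRInt (Vfield u v w T N B) 0 s) (vscal (lambda s) (N s)).

(* gamma is a V-Mannheim curve: at each point of I = (a,b) the binormal
   Bbar of beta (computed from beta' = d1, beta'' = d2) equals eps * N
   with eps = +1 or -1 (linear dependence of the unit vectors). *)
Definition VMannheim (a b : R) (d1 d2 N : R -> R3) : Prop :=
  forall s, a < s < b ->
    exists eps : R, (eps = 1 \/ eps = -1) /\
      frenetB (d1 s) (d2 s) = vscal eps (N s).

(* Main.v *)
Require Import Defs.
From Stdlib Require Import Reals Lra Psatz.
From Coquelicot Require Import Coquelicot.
Open Scope R_scope.

Lemma der_eq (f : R -> R) (x l l' : R) : is_derive f x l -> l = l' -> is_derive f x l'.
Proof. intros H ->; exact H. Qed.

Lemma der_mult (f g : R -> R) x df dg : is_derive f x df -> is_derive g x dg ->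
  is_derive (fun t => f t * g t) x (df * g x + f x * dg).
Proof. intros Hf Hg. apply (is_derive_mult f g x df dg Hf Hg). intros; apply Rmult_comm. Qed.

Lemma der_plus (f g : R -> R) x df dg : is_derive f x df -> is_derive g x dg ->
  is_derive (fun t => f t + g t) x (df + dg).
Proof. intros Hf Hg. apply (is_derive_plus f g x df dg Hf Hg). Qed.

Lemma der_fst {U V : NormedModule R_AbsRing} (f : R -> U * V) s l :
  is_derive f s l -> is_derive (fun t => fst (f t)) s (fst l).
Proof.
  intros H. unfold is_derive in *.
  apply filterdiff_ext_lin with (fun y => fst (scal y l)).
  - apply (filterdiff_comp' f (fun p : U * V => fst p) s). exact H.
    apply filterdiff_linear, is_linear_fst.
  - intros y. reflexivity.
Qed.

Lemma der_snd {U V : NormedModule R_AbsRing} (f : R -> U * V) s l :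
  is_derive f s l -> is_derive (fun t => snd (f t)) s (snd l).
Proof.
  intros H. unfold is_derive in *.
  apply filterdiff_ext_lin with (fun y => snd (scal y l)).
  - apply (filterdiff_comp' f (fun p : U * V => snd p) s). exact H.
    apply filterdiff_linear, is_linear_snd.
  - intros y. reflexivity.
Qed.

Definition RR : NormedModule R_AbsRing := prod_NormedModule R_AbsRing R_NormedModule R_NormedModule.
Lemma der_vx (f : R -> R3) s l : is_derive f s l -> is_derive (fun t => vx (f t)) s (vx l).
Proof. intros H. unfold vx.
  pose proof (@der_fst RR R_NormedModule f s l H) as H1.
  exact (@der_fst R_NormedModule R_NormedModule (fun t => fst (f t)) s (fst l) H1). Qed.
Lemma der_vy (f : R -> R3) s l : is_derive f s l -> is_derive (fun t => vy (f t)) s (vy l).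
Proof. intros H. unfold vy.
  pose proof (@der_fst RR R_NormedModule f s l H) as H1.
  exact (@der_snd R_NormedModule R_NormedModule (fun t => fst (f t)) s (fst l) H1). Qed.
Lemma der_vz (f : R -> R3) s l : is_derive f s l -> is_derive (fun t => vz (f t)) s (vz l).
Proof. intros H. unfold vz.
  exact (@der_snd RR R_NormedModule f s l H). Qed.
Lemma der_dot (p q : R -> R3) s dp dq : is_derive p s dp -> is_derive q s dq ->
  is_derive (fun t => dot (p t) (q t)) s (dot dp (q s) + dot (p s) dq).
Proof.
  intros Hp Hq.
  pose proof (der_vx p s dp Hp) as px. pose proof (der_vy p s dp Hp) as py. pose proof (der_vz p s dp Hp) as pz.
  pose proof (der_vx q s dq Hq) as qx. pose proof (der_vy q s dq Hq) as qy. pose proof (der_vz q s dq Hq) as qz.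
  pose proof (der_plus _ _ s _ _ (der_plus _ _ s _ _ (der_mult _ _ s _ _ px qx) (der_mult _ _ s _ _ py qy)) (der_mult _ _ s _ _ pz qz)) as H.
  unfold dot. eapply der_eq. exact H. cbv beta. ring.
Qed.
Lemma ftc (g : R -> R) a b s : a < 0 < b -> (forall t, a < t < b -> ex_derive g t) -> a < s < b ->
  is_derive (fun x => RInt g 0 x) s (g s).
Proof.
  intros Hab Hg Hs. apply (is_derive_RInt g (fun x => RInt g 0 x) 0 s).
  - apply (locally_interval _ s a b); simpl; try lra.
    intros y Hy1 Hy2. apply (RInt_correct g 0 y). apply (ex_RInt_continuous g).
    intros z Hz. apply (@ex_derive_continuous R_AbsRing R_NormedModule g z). apply Hg.
    split.
    + apply Rlt_le_trans with (Rmin 0 y). apply Rmin_glb_lt; lra. lra.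
    + apply Rle_lt_trans with (Rmax 0 y). lra. apply Rmax_lub_lt; lra.
  - apply (@ex_derive_continuous R_AbsRing R_NormedModule g s), Hg, Hs.
Qed.

Lemma v3ext (p q : R3) : vx p = vx q -> vy p = vy q -> vz p = vz q -> p = q.
Proof. destruct p as [[p1 p2] p3], q as [[q1 q2] q3]; unfold vx, vy, vz; simpl; intros; subst; reflexivity. Qed.

Lemma alg (t n b : R3) (ka ta u v w la dl : R) :
 dot t t = 1 -> dot n n = 1 -> dot t n = 0 ->
 vx b = u * vx t + (v * vx n + w * vx (cross t n)) + (dl * vx n + la * (- ka * vx t + ta * vx (cross t n))) ->
 vy b = u * vy t + (v * vy n + w * vy (cross t n)) + (dl * vy n + la * (- ka * vy t + ta * vy (cross t n))) ->
 vz b = u * vz t + (v * vz n + w * vz (cross t n)) + (dl * vz n + la * (- ka * vz t + ta * vz (cross t n))) ->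
 dot b n = v + dl /\
 dot b (vadd (vscal (- ka) t) (vscal ta (cross t n))) = - (u*ka - w*ta) + la * (ka^2 + ta^2).
Proof.
  destruct t as [[t1 t2] t3], n as [[n1 n2] n3], b as [[b1 b2] b3].
  intros Htt Hnn Htn Hx Hy Hz.
  assert (E1 : dot (b1,b2,b3) (n1,n2,n3) = (u - la*ka) * dot (t1,t2,t3) (n1,n2,n3)
     + (v+dl) * dot (n1,n2,n3) (n1,n2,n3)).
  { unfold dot at 1. rewrite Hx, Hy, Hz. unfold dot, cross, vx, vy, vz; simpl. ring. }
  assert (E2 : dot (b1,b2,b3) (vadd (vscal (- ka) (t1,t2,t3)) (vscal ta (cross (t1,t2,t3) (n1,n2,n3))))
    = -(u-la*ka)*ka*(dot (t1,t2,t3) (t1,t2,t3)) - (v+dl)*ka*(dot (t1,t2,t3) (n1,n2,n3))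
      + (w+la*ta)*ta*((dot (t1,t2,t3) (t1,t2,t3))*(dot (n1,n2,n3) (n1,n2,n3)) - (dot (t1,t2,t3) (n1,n2,n3))^2)).
  { unfold dot at 1. rewrite Hx, Hy, Hz. unfold dot, cross, vadd, vscal, vx, vy, vz; simpl. ring. }
  rewrite E1, E2, Htt, Hnn, Htn. split; ring.
Qed.

Lemma vscal_vscal a b n : vscal a (vscal b n) = vscal (a*b) n.
Proof. destruct n as [[n1 n2] n3]; unfold vscal, vx, vy, vz; simpl. f_equal; [f_equal|]; ring. Qed.

Lemma dot_scal p c n : dot p (vscal c n) = c * dot p n.
Proof. destruct n as [[n1 n2] n3]; unfold dot, vscal, vx, vy, vz; simpl. ring. Qed.

Lemma dot_cross1 p q : dot p (cross p q) = 0.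
Proof. unfold dot, cross, vx, vy, vz; simpl. ring. Qed.
Lemma dot_cross2 p q : dot q (cross p q) = 0.
Proof. unfold dot, cross, vx, vy, vz; simpl. ring. Qed.

Lemma dot_pos X : X <> vzero -> 0 < dot X X.
Proof.
  destruct X as [[x y] z]; unfold dot, vzero, vx, vy, vz; simpl. intros H.
  pose proof (Rle_0_sqr x); pose proof (Rle_0_sqr y); pose proof (Rle_0_sqr z).
  destruct (Req_dec x 0) as [Hx|Hx].
  - destruct (Req_dec y 0) as [Hy|Hy].
    + destruct (Req_dec z 0) as [Hz|Hz].
      * subst. exfalso; apply H; reflexivity.
      * pose proof (Rlt_0_sqr z Hz). unfold Rsqr in *; lra.
    + pose proof (Rlt_0_sqr y Hy). unfold Rsqr in *; lra.
  - pose proof (Rlt_0_sqr x Hx). unfold Rsqr in *; lra.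
Qed.

Lemma back (X n : R3) eps : X <> vzero -> (eps = 1 \/ eps = -1) ->
  vscal (/ vnorm X) X = vscal eps n -> exists c, c <> 0 /\ X = vscal c n.
Proof.
  intros HX He H. pose proof (dot_pos X HX) as Hp.
  assert (Hk : 0 < vnorm X) by (unfold vnorm; apply sqrt_lt_R0; exact Hp).
  exists (vnorm X * eps). split.
  - destruct He; subst; nra.
  - rewrite <- vscal_vscal, <- H, vscal_vscal, Rinv_r by lra.
    destruct X as [[x y] z]; unfold vscal, vx, vy, vz; simpl. f_equal; [f_equal|]; ring.
Qed.

Lemma cross_par (p q n : R3) : dot p n = 0 -> dot q n = 0 -> dot n n = 1 ->
  cross p q = vscal (dot (cross p q) n) n.
Proof.
  intros Hp Hq Hn.
  assert (I1 : vx (cross p q) - dot (cross p q) n * vx n =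
     vx (cross p q) * (1 - dot n n) - dot q n * vx (cross n p) + dot p n * vx (cross n q)).
  { destruct p as [[p1 p2] p3], q as [[q1 q2] q3], n as [[n1 n2] n3]; unfold dot, cross, vx, vy, vz; simpl; ring. }
  assert (I2 : vy (cross p q) - dot (cross p q) n * vy n =
     vy (cross p q) * (1 - dot n n) - dot q n * vy (cross n p) + dot p n * vy (cross n q)).
  { destruct p as [[p1 p2] p3], q as [[q1 q2] q3], n as [[n1 n2] n3]; unfold dot, cross, vx, vy, vz; simpl; ring. }
  assert (I3 : vz (cross p q) - dot (cross p q) n * vz n =
     vz (cross p q) * (1 - dot n n) - dot q n * vz (cross n p) + dot p n * vz (cross n q)).
  { destruct p as [[p1 p2] p3], q as [[q1 q2] q3], n as [[n1 n2] n3]; unfold dot, cross, vx, vy, vz; simpl; ring. }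
  rewrite Hp, Hq, Hn in I1, I2, I3.
  apply v3ext; change (vx (vscal ?c ?m)) with (c * vx m); change (vy (vscal ?c ?m)) with (c * vy m);
   change (vz (vscal ?c ?m)) with (c * vz m); lra.
Qed.

Lemma fin (X n : R3) c : X = vscal c n -> dot n n = 1 -> c <> 0 ->
  exists eps, (eps = 1 \/ eps = -1) /\ vscal (/ vnorm X) X = vscal eps n.
Proof.
  intros -> Hn Hc.
  assert (E : vnorm (vscal c n) = Rabs c).
  { unfold vnorm. rewrite dot_scal.
    replace (dot (vscal c n) n) with (c * dot n n).
    2:{ destruct n as [[n1 n2] n3]; unfold dot, vscal, vx, vy, vz; simpl; ring. }
    rewrite Hn, Rmult_1_r, <- sqrt_Rsqr_abs. unfold Rsqr. reflexivity. }
  rewrite E, vscal_vscal.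
  destruct (Rlt_or_le 0 c) as [H|H].
  - exists 1. split; [left; reflexivity|]. rewrite Rabs_pos_eq by lra. rewrite Rinv_l by lra. reflexivity.
  - exists (-1). split; [right; reflexivity|]. rewrite Rabs_left by lra.
    replace (/ - c * c) with (-1) by (field; lra). reflexivity.
Qed.

Lemma loc0 (f : R -> R) a b s (l : R) : (forall t, a < t < b -> f t = 0) -> a < s < b ->
  is_derive f s l -> l = 0.
Proof.
  intros Hf Hs Hd.
  assert (H0 : is_derive f s 0).
  { apply (is_derive_ext_loc (fun _ => 0) f s 0).
    - apply (locally_interval _ s a b); simpl; try lra. intros y H1 H2. symmetry; apply Hf; lra.
    - apply (is_derive_const 0 s). }
  apply is_derive_unique in Hd. apply is_derive_unique in H0. rewrite <- Hd, H0. reflexivity.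
Qed.

Lemma vscal0 n : vscal 0 n = vzero.
Proof. destruct n as [[n1 n2] n3]; unfold vscal, vzero, vx, vy, vz; simpl. f_equal; [f_equal|]; ring. Qed.

Theorem mainTheorem1
  (a b : R) (gamma T N B : R -> R3) (kappa tau u v w lambda : R -> R)
  (beta1 beta2 : R -> R3)
  (* I = (a,b) is an open interval containing 0 (the base point of the integral) *)
  (Hab : a < 0 < b)
  (* gamma is unit speed with Frenet frame {T,N,B}, curvature kappa > 0, torsion tau *)
  (Hgamma : forall s, a < s < b -> is_derive gamma s (T s))
  (HTT : forall s, a < s < b -> dot (T s) (T s) = 1)
  (HNN : forall s, a < s < b -> dot (N s) (N s) = 1)
  (HTN : forall s, a < s < b -> dot (T s) (N s) = 0)
  (HB : forall s, a < s < b -> B s = cross (T s) (N s))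
  (Hkappa : forall s, a < s < b -> 0 < kappa s)
  (HdT : forall s, a < s < b -> is_derive T s (vscal (kappa s) (N s)))
  (HdN : forall s, a < s < b ->
     is_derive N s (vadd (vscal (- kappa s) (T s)) (vscal (tau s) (B s))))
  (HdB : forall s, a < s < b -> is_derive B s (vscal (- tau s) (N s)))
  (* u, v, w differentiable with u^2+v^2+w^2 = 1; lambda differentiable *)
  (Hu : forall s, a < s < b -> ex_derive u s)
  (Hv : forall s, a < s < b -> ex_derive v s)
  (Hw : forall s, a < s < b -> ex_derive w s)
  (Huvw : forall s, a < s < b -> u s ^ 2 + v s ^ 2 + w s ^ 2 = 1)
  (Hlambda : forall s, a < s < b -> ex_derive lambda s)
  (* beta(s) = int_0^s V + lambda N, with beta' = beta1, beta'' = beta2 on I *)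
  (Hbeta1 : forall s, a < s < b ->
     is_derive (betaCurve u v w lambda T N B) s (beta1 s))
  (Hbeta2 : forall s, a < s < b -> is_derive beta1 s (beta2 s))
  (* beta regular with nonvanishing curvature: beta' x beta'' <> 0 *)
  (Hreg : forall s, a < s < b -> cross (beta1 s) (beta2 s) <> vzero) :
  VMannheim a b beta1 beta2 N <->
  ((forall s, a < s < b ->
      u s * kappa s - w s * tau s = lambda s * (kappa s ^ 2 + tau s ^ 2)) /\
   (forall s, a < s < b -> is_derive lambda s (- v s))).
Proof.
  assert (Dl : forall s, a < s < b -> is_derive lambda s (Derive lambda s))
    by (intros; apply Derive_correct; auto).
  assert (Du : forall s, a < s < b -> is_derive u s (Derive u s))
    by (intros; apply Derive_correct; auto).
  assert (Dv : forall s, a < s < b -> is_derive v s (Derive v s))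
    by (intros; apply Derive_correct; auto).
  assert (Dw : forall s, a < s < b -> is_derive w s (Derive w s))
    by (intros; apply Derive_correct; auto).
  assert (Gx : forall t, a < t < b -> ex_derive (fun r => u r * vx (T r) + (v r * vx (N r) + w r * vx (B r))) t).
  { intros t Ht. eexists.
    exact (der_plus _ _ t _ _ (der_mult _ _ t _ _ (Du t Ht) (der_vx _ _ _ (HdT t Ht)))
            (der_plus _ _ t _ _ (der_mult _ _ t _ _ (Dv t Ht) (der_vx _ _ _ (HdN t Ht)))
                                (der_mult _ _ t _ _ (Dw t Ht) (der_vx _ _ _ (HdB t Ht))))). }
  assert (B1x : forall s, a < s < b -> vx (beta1 s) = (u s * vx (T s) + (v s * vx (N s) + w s * vx (B s))) + (Derive lambda s * vx (N s) + lambda s * (- kappa s * vx (T s) + tau s * vx (B s)))).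
  { intros s Hs.
    pose proof (der_vx _ _ _ (Hbeta1 s Hs)) as H1.
    pose proof (der_plus _ _ s _ _ (ftc _ a b s Hab Gx Hs) (der_mult _ _ s _ _ (Dl s Hs) (der_vx _ _ _ (HdN s Hs)))) as H2.
    apply is_derive_unique in H1. apply is_derive_unique in H2.
    rewrite <- H1. exact H2. }
  assert (B1y : forall s, a < s < b -> vy (beta1 s) = (u s * vy (T s) + (v s * vy (N s) + w s * vy (B s))) + (Derive lambda s * vy (N s) + lambda s * (- kappa s * vy (T s) + tau s * vy (B s)))).
  { intros s Hs.
    assert (Gy : forall t, a < t < b -> ex_derive (fun r => u r * vy (T r) + (v r * vy (N r) + w r * vy (B r))) t).
    { intros t Ht. eexists.
      exact (der_plus _ _ t _ _ (der_mult _ _ t _ _ (Du t Ht) (der_vy _ _ _ (HdT t Ht)))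
            (der_plus _ _ t _ _ (der_mult _ _ t _ _ (Dv t Ht) (der_vy _ _ _ (HdN t Ht)))
                                (der_mult _ _ t _ _ (Dw t Ht) (der_vy _ _ _ (HdB t Ht))))). }
    pose proof (der_vy _ _ _ (Hbeta1 s Hs)) as H1.
    pose proof (der_plus _ _ s _ _ (ftc _ a b s Hab Gy Hs) (der_mult _ _ s _ _ (Dl s Hs) (der_vy _ _ _ (HdN s Hs)))) as H2.
    apply is_derive_unique in H1. apply is_derive_unique in H2.
    rewrite <- H1. exact H2. }
  assert (B1z : forall s, a < s < b -> vz (beta1 s) = (u s * vz (T s) + (v s * vz (N s) + w s * vz (B s))) + (Derive lambda s * vz (N s) + lambda s * (- kappa s * vz (T s) + tau s * vz (B s)))).
  { intros s Hs.
    assert (Gz : forall t, a < t < b -> ex_derive (fun r => u r * vz (T r) + (v r * vz (N r) + w r * vz (B r))) t).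
    { intros t Ht. eexists.
      exact (der_plus _ _ t _ _ (der_mult _ _ t _ _ (Du t Ht) (der_vz _ _ _ (HdT t Ht)))
            (der_plus _ _ t _ _ (der_mult _ _ t _ _ (Dv t Ht) (der_vz _ _ _ (HdN t Ht)))
                                (der_mult _ _ t _ _ (Dw t Ht) (der_vz _ _ _ (HdB t Ht))))). }
    pose proof (der_vz _ _ _ (Hbeta1 s Hs)) as H1.
    pose proof (der_plus _ _ s _ _ (ftc _ a b s Hab Gz Hs) (der_mult _ _ s _ _ (Dl s Hs) (der_vz _ _ _ (HdN s Hs)))) as H2.
    apply is_derive_unique in H1. apply is_derive_unique in H2.
    rewrite <- H1. exact H2. }
  assert (DD : forall s, a < s < b ->
     dot (beta1 s) (N s) = v s + Derive lambda s /\
     dot (beta1 s) (vadd (vscal (- kappa s) (T s)) (vscal (tau s) (B s))) =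
       - (u s * kappa s - w s * tau s) + lambda s * (kappa s ^ 2 + tau s ^ 2)).
  { intros s Hs. pose proof (B1x s Hs) as X1. pose proof (B1y s Hs) as Y1. pose proof (B1z s Hs) as Z1.
    rewrite (HB s Hs) in X1, Y1, Z1 |- *.
    apply alg; auto. }
  assert (Df : forall s, a < s < b -> is_derive (fun t => dot (beta1 t) (N t)) s
     (dot (beta2 s) (N s) + dot (beta1 s) (vadd (vscal (- kappa s) (T s)) (vscal (tau s) (B s))))).
  { intros s Hs. apply der_dot; auto. }
  split.
  - intros HM.
    assert (P : forall s, a < s < b -> dot (beta1 s) (N s) = 0 /\ dot (beta2 s) (N s) = 0).
    { intros s Hs. destruct (HM s Hs) as [eps [He Heq]].
      destruct (back _ _ eps (Hreg s Hs) He Heq) as [c [Hc HX]].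
      pose proof (dot_cross1 (beta1 s) (beta2 s)) as E1.
      pose proof (dot_cross2 (beta1 s) (beta2 s)) as E2.
      rewrite HX, dot_scal in E1, E2.
      split; [apply (Rmult_eq_reg_l c); [lra|exact Hc] | apply (Rmult_eq_reg_l c); [lra|exact Hc]]. }
    split.
    + intros s Hs.
      pose proof (loc0 _ a b s _ (fun t Ht => proj1 (P t Ht)) Hs (Df s Hs)) as Z.
      destruct (DD s Hs) as [_ D2]. destruct (P s Hs) as [_ P2].
      rewrite P2, D2 in Z. lra.
    + intros s Hs. destruct (DD s Hs) as [D1 _]. destruct (P s Hs) as [P1 _].
      replace (- v s) with (Derive lambda s) by lra. apply Dl; exact Hs.
  - intros [Hid Hl] s Hs.
    assert (P1 : forall t, a < t < b -> dot (beta1 t) (N t) = 0).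
    { intros t Ht. destruct (DD t Ht) as [D1 _].
      rewrite D1, (is_derive_unique _ _ _ (Hl t Ht)). lra. }
    assert (P2 : dot (beta2 s) (N s) = 0).
    { pose proof (loc0 _ a b s _ P1 Hs (Df s Hs)) as Z.
      destruct (DD s Hs) as [_ D2]. rewrite D2 in Z. pose proof (Hid s Hs). lra. }
    pose proof (cross_par _ _ _ (P1 s Hs) P2 (HNN s Hs)) as HX.
    unfold frenetB.
    apply (fin _ _ (dot (cross (beta1 s) (beta2 s)) (N s))); auto.
    intros Hc. apply (Hreg s Hs). rewrite HX, Hc. apply vscal0.
Qed.
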